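(* Let $\widehat{\mathcal H}=\mathcal H^{even}\oplus\mathcal H^{odd}$ be a $\mathbb Z_2$-graded Hilbert space with grading operator $\epsilon=\begin{pmatrix}1&0\\0&-1\end{pmatrix}$, and let $\omega$ be a unitary element of the $C^*$-algebra $C^*(\mathbf 1,\epsilon)\subseteq\mathcal B(\widehat{\mathcal H})$ generated by the identity and $\epsilon$. For $x\in\mathcal B(\widehat{\mathcal H})$ put $x^{\omega}:=\omega\,\overline{x}\,\omega$, where $\overline x$ denotes the ordinary Hilbert space adjoint of $x$; call $x$ $\omega$-hermitian if $x^\omega=x$. Then $x$ is $\omega$-hermitian with $\Vert x\Vert\le 1$ if and only if $$\Vert x-it\,\omega\Vert\le\sqrt{1+t^2}\quad\text{for every } t\in\mathbb R.$$
   Context: $C^*(\mathbf 1,\epsilon)\cong\mathbb C\oplus\mathbb C$, so a unitary $\omega$ in it has the form $\omega=\begin{pmatrix}\omega_0&0\\0&\omega_1\end{pmatrix}$ with $\omega_0,\omega_1$ complex numbers of modulus one (times the identity on the respective summand). *)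

(* Defs.v *)
From HB Require Import structures.
From mathcomp Require Import all_boot all_order all_algebra.
From mathcomp Require Import reals.
From mathcomp Require Export complex.
Set Implicit Arguments. Unset Strict Implicit. Unset Printing Implicit Defensive.
Import Order.TTheory GRing.Theory Num.Theory.
Local Open Scope ring_scope.
Local Open Scope complex_scope.

Section Hilbert.
Variable R : realType.
Local Notation C := R[i].
Variable H : lmodType C.
Variable ip : H -> H -> C.   (* inner product, linear in the first argument *)

Definition normH (u : H) : R := Num.sqrt (@complex.Re R (ip u u)).

Definition is_inner_product : Prop :=
  [/\ (forall (a : C) (u v w : H), ip (a *: u + v) w = a * ip u w + ip v w),
      (forall u v : H, ip v u = (ip u v)^*),
      (forall u : H, 0 <= @complex.Re R (ip u u)) &
      (forall u : H, @complex.Re R (ip u u) = 0 -> u = 0)].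

Definition ip_complete : Prop :=
  forall s : nat -> H,
    (forall e : R, 0 < e -> exists N : nat, forall m n : nat,
        (N <= m)%N -> (N <= n)%N -> normH (s m - s n) < e) ->
    exists l : H, forall e : R, 0 < e -> exists N : nat, forall n : nat,
        (N <= n)%N -> normH (s n - l) < e.

Definition is_hilbert : Prop := is_inner_product /\ ip_complete.

Definition is_linear (x : H -> H) : Prop :=
  forall (a : C) (u v : H), x (a *: u + v) = a *: x u + x v.

(* ||x|| <= c for the operator norm (unfolded: ||x u|| <= c ||u|| for all u) *)
Definition opnorm_le (x : H -> H) (c : R) : Prop :=
  forall u : H, normH (x u) <= c * normH u.

Definition is_bounded (x : H -> H) : Prop :=
  is_linear x /\ exists c : R, opnorm_le x c.

Definition is_adjoint (x y : H -> H) : Prop :=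
  forall u v : H, ip (x u) v = ip u (y v).

(* eps is a grading operator: bounded, self-adjoint, eps^2 = 1, i.e.
   eps = diag(1,-1) w.r.t. H = H^even (+) H^odd (its +-1 eigenspaces) *)
Definition is_grading (eps : H -> H) : Prop :=
  [/\ is_bounded eps, is_adjoint eps eps & forall u, eps (eps u) = u].

(* membership in C*(1, eps) = span{1, eps} (eps^2 = 1, eps* = eps) *)
Definition in_Cstar_1_eps (eps w : H -> H) : Prop :=
  exists a b : C, forall u, w u = a *: u + b *: eps u.

Definition is_unitary_op (w : H -> H) : Prop :=
  is_bounded w /\ exists w' : H -> H,
    [/\ is_adjoint w w', (forall u, w (w' u) = u) & (forall u, w' (w u) = u)].

End Hilbert.

(* Main.v *)
Require Import Defs.
From HB Require Import structures.
From mathcomp Require Import all_boot all_order all_algebra.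
From mathcomp Require Import reals complex.
From mathcomp Require Import ring lra.
Import Order.TTheory GRing.Theory Num.Theory.
Local Open Scope ring_scope.
Local Open Scope complex_scope.

Theorem lemma2 (R : realType) (H : lmodType R[i]) (ip : H -> H -> R[i])
  (hH : is_hilbert ip)
  (eps : H -> H) (heps : is_grading ip eps)
  (omega : H -> H) (homega_alg : in_Cstar_1_eps eps omega)
  (homega_u : is_unitary_op ip omega)
  (x : H -> H) (hx : is_bounded ip x)
  (xbar : H -> H) (hxbar : is_adjoint ip x xbar) :
  ((forall u : H, omega (xbar (omega u)) = x u) /\ opnorm_le ip x 1) <->
  (forall t : R,
     opnorm_le ip (fun u : H => x u - (Complex 0 1 * t%:C) *: omega u)
       (Num.sqrt (1 + t ^+ 2))).
Proof.
case: hH => [[hlin hsym hpos hdef] _].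
case: hx => [xlin _].
case: homega_u => [[wlin _] [w' [wadj ww' w'w]]].
have ip0l : forall w, ip 0 w = 0.
  move=> w; have := hlin 1 0 0 w; rewrite scale1r addr0 mul1r. idtac.
  move/(congr1 (fun z => z - ip 0 w)) => /=; rewrite addrK subrr => ->; done.
have ipZl a u w : ip (a *: u) w = a * ip u w.
  rewrite -[a*:u]addr0. rewrite hlin. rewrite ip0l addr0. done.
have ipDl u v w : ip (u+v) w = ip u w + ip v w.
  by have := hlin 1 u v w; rewrite scale1r mul1r.
have ipDr u a v w : ip u (a *: v + w) = a^* * ip u v + ip u w.
  by rewrite hsym hlin rmorphD rmorphM /= -(hsym v u) -(hsym w u).
have iso u v : ip (omega u) (omega v) = ip u v by rewrite wadj w'w.
have key u (t : R) : complex.Re (ip (x u - (Complex 0 1 * t%:C) *: omega u) (x u - (Complex 0 1 * t%:C) *: omega u)) = complex.Re (ip (x u) (x u)) - 2 * t * complex.Im (ip (x u) (omega u)) + t^+2 * complex.Re (ip u u).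
  set c := Complex 0 1 * t%:C; set a := x u; set b := omega u.
  have -> : a - c *: b = (-c) *: b + a by rewrite addrC scaleNr.
  rewrite ipDr !hlin (hsym a b) iso.
  move: (ip a a) (ip a b) (ip u u) => [p1 p2] [z1 z2] [q1 q2].
  rewrite /c -complexr0. simpc. rewrite /=. ring.
split.
- case=> [herm hn] t u.
  have z0 : complex.Im (ip (x u) (omega u)) = 0.
    have e : ip (x u) (omega u) = (ip (x u) (omega u))^*.
      by rewrite -{1}herm wadj w'w hsym -hxbar.
    by move: e; case: (ip _ _) => a b /= [] ?; lra.
  have hu := hn u; rewrite /normH mul1r ler_sqrt // in hu.
  rewrite /normH /= -sqrtrM; last by rewrite addr_ge0 // sqr_ge0.
  rewrite ler_sqrt; last by rewrite mulr_ge0 // addr_ge0 // sqr_ge0.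
  rewrite key z0. have := hpos u. nra.
- move=> h.
  have hb u t : complex.Re (ip (x u) (x u)) - 2 * t * complex.Im (ip (x u) (omega u)) + t^+2 * complex.Re (ip u u) <= (1 + t^+2) * complex.Re (ip u u).
    have := h t u; rewrite /normH /= -sqrtrM; last by rewrite addr_ge0 // sqr_ge0.
    rewrite ler_sqrt; last by rewrite mulr_ge0 // addr_ge0 // sqr_ge0.
    by rewrite key.
  split; last first.
    move=> u; have := hb u 0; rewrite /normH mul1r ler_sqrt //.
    have := hpos u; have := hpos (x u). nra.
  have him u : complex.Im (ip (x u) (omega u)) = 0.
    case: (eqVneq (complex.Im (ip (x u) (omega u))) 0) => // mn0.
    exfalso.
    set m := complex.Im (ip (x u) (omega u)) in mn0 hb.
    set q := complex.Re (ip u u).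
    set t := - (q + 1) / (2 * m).
    have e : 2 * t * m = - (q + 1) by rewrite /t; field.
    have := hb u t; have := hpos u; have := hpos (x u). rewrite -/q -/m. nra.
  pose B u v := ip (x u) (omega v).
  have BL a u v w : B (a *: u + v) w = a * B u w + B v w by rewrite /B xlin hlin.
  have BR a u v w : B u (a *: v + w) = a^* * B u v + B u w by rewrite /B wlin ipDr.
  have Hs u v : B u v = (B v u)^*.
    have e1 : complex.Im (B ((Complex 1 0) *: u + v) ((Complex 1 0) *: u + v)) = 0 := him _.
    have e2 : complex.Im (B ('i%C *: u + v) ('i%C *: u + v)) = 0 := him _.
    have e3 : complex.Im (B u u) = 0 := him _.
    have e4 : complex.Im (B v v) = 0 := him _.
    rewrite !BL !BR in e1 e2.
    move: e1 e2 e3 e4; case: (B u u) => a1 a2; case: (B u v) => b1 b2;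
      case: (B v u) => c1 c2; case: (B v v) => d1 d2.
    simpc => /= e1 e2 e3 e4.
    apply/eqP; rewrite eq_complex /=; apply/andP; split; apply/eqP; lra.
  have E v : xbar (omega v) = w' (x v).
    have e u : ip u (xbar (omega v)) = ip u (w' (x v)).
      by rewrite -hxbar -/(B u v) Hs /B -hsym wadj.
    set d := xbar (omega v) - w' (x v).
    have : ip d d = 0.
      by rewrite {2}/d addrC -scaleN1r ipDr (e d) rmorphN1 mulN1r addNr.
    move=> hd; have /hdef : complex.Re (ip d d) = 0 by rewrite hd.
    by move/eqP; rewrite subr_eq0 => /eqP.
  by move=> u; rewrite E ww'.
Qed.
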